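(* For every integer $r\ge 1$, $$\sum_{n=1}^{\infty}\frac{n4^n}{(2n-1)^2(4n+2r-1)}\frac{\binom{2n}{n}}{\binom{4n+2r-2}{2n+r-1}}=\sqrt{2}\sum_{k=0}^{r}\frac{(-1)^k}{(2k+1)2^{2r-k-1}}\binom{r}{k}\mathcal{B}(k),$$ where $\mathcal{B}(k)=\int_0^{1/2}\frac{t^k}{\sqrt{1-t}}\,\mathrm{d}t$. *)

(* Defs.v *)
From Stdlib Require Import Reals.
From Coquelicot Require Import Coquelicot.
Open Scope R_scope.

(* B(k) = \int_0^{1/2} t^k / sqrt(1-t) dt  (proper Riemann integral; the
   integrand is continuous on [0,1/2]). *)
Definition calB (k : nat) : R :=
  RInt (fun t => t ^ k / sqrt (1 - t)) 0 (1 / 2).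

Definition lhs_term (r n : nat) : R :=
  INR n * 4 ^ n / ((2 * INR n - 1) ^ 2 * (4 * INR n + 2 * INR r - 1))
  * (Binomial.C (2 * n) n / Binomial.C (4 * n + 2 * r - 2) (2 * n + r - 1)).

(* The right-hand side. For 0 <= k <= r and r >= 1, 2r-k-1 >= 0, so the
   natural-number subtraction in the exponent is exact. *)
Definition rhs_value (r : nat) : R :=
  sqrt 2 * sum_f_R0 (fun k =>
    (-1) ^ k / ((2 * INR k + 1) * 2 ^ (2 * r - k - 1)) * Binomial.C r k * calB k) r.

(* Main.v *)
Require Import Defs.
From Stdlib Require Import Reals Lra Lia Psatz.
From Coquelicot Require Import Coquelicot.
Open Scope R_scope.

Fixpoint b (n : nat) : R :=
  match n with O => 1 | S n => b n * (2 * INR n + 1) / (2 * INR n + 2) end.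

Lemma b_pos n : 0 < b n.
Proof.
  induction n; simpl. lra.
  pose proof (pos_INR n).
  apply Rmult_lt_0_compat. apply Rmult_lt_0_compat; lra. apply Rinv_0_lt_compat; lra.
Qed.

Lemma b_le1 n : b n <= 1.
Proof.
  induction n; simpl. lra.
  pose proof (pos_INR n). pose proof (b_pos n).
  apply Rle_trans with (b n); [|lra].
  unfold Rdiv. rewrite Rmult_assoc.
  rewrite <- (Rmult_1_r (b n)) at 2. apply Rmult_le_compat_l. lra.
  apply Rmult_le_reg_r with (2 * INR n + 2). lra.
  rewrite Rmult_assoc, Rinv_l; lra.
Qed.

Lemma b_S n : b (S n) = b n * (2 * INR n + 1) / (2 * INR n + 2).
Proof. reflexivity. Qed.

Lemma b_sq n : b n * b n <= / (INR n + 1).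
Proof.
  induction n. simpl. lra.
  rewrite b_S, S_INR. pose proof (pos_INR n). pose proof (b_pos n).
  set (x := INR n) in *.
  assert (H1: b n * (2 * x + 1) / (2 * x + 2) * (b n * (2 * x + 1) / (2 * x + 2))
     = (b n * b n) * ((2*x+1)^2 / (2*x+2)^2)) by (field; lra).
  rewrite H1.
  apply Rle_trans with (/ (x+1) * ((2*x+1)^2/(2*x+2)^2)).
  apply Rmult_le_compat_r. apply Rmult_le_pos. nra. left; apply Rinv_0_lt_compat; nra. exact IHn.
  replace (/ (x + 1) * ((2 * x + 1) ^ 2 / (2 * x + 2) ^ 2)) with ((2*x+1)^2 / (4 * (x+1)^3)) by (field; lra).
  apply Rmult_le_reg_r with (4 * (x+1)^3 * (x+1+1)). nra.
  replace ((2 * x + 1) ^ 2 / (4 * (x + 1) ^ 3) * (4 * (x + 1) ^ 3 * (x + 1 + 1))) with ((2*x+1)^2 * (x+2)) by (field; lra).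
  replace (/ (x + 1 + 1) * (4 * (x + 1) ^ 3 * (x + 1 + 1))) with (4 * (x+1)^3) by (field; lra).
  nra.
Qed.

Lemma b_lim : is_lim_seq b 0.
Proof.
  assert (Hs : is_lim_seq (fun n => b n * b n) 0).
  { apply is_lim_seq_le_le with (u := fun _ => 0) (w := fun n => / (INR n + 1)).
    intro n. split. pose proof (b_pos n); nra. apply b_sq.
    apply is_lim_seq_const.
    replace (Finite 0) with (Rbar_inv p_infty) by reflexivity.
    apply is_lim_seq_inv. 2: discriminate.
    eapply is_lim_seq_ext with (u := fun n => INR (S n)). intro; rewrite S_INR; reflexivity.
    apply -> is_lim_seq_incr_1. apply is_lim_seq_INR. }
  apply is_lim_seq_ext with (u := fun n => sqrt (b n * b n)).
  intro n. rewrite sqrt_square; [reflexivity| left; apply b_pos].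
  rewrite <- sqrt_0. apply is_lim_seq_continuous. apply continuity_pt_sqrt. lra. exact Hs.
Qed.
Lemma Cb n : Binomial.C (2 * n) n = 4 ^ n * b n.
Proof.
  induction n. unfold Binomial.C. simpl. field.
  unfold Binomial.C in *.
  replace (2 * S n - S n)%nat with (S n) by lia.
  replace (2 * n - n)%nat with n in IHn by lia.
  replace (2 * S n)%nat with (S (S (2 * n))) by lia.
  simpl b. 
  assert (E: b n = INR (Factorial.fact (2 * n)) / (INR (Factorial.fact n) * INR (Factorial.fact n)) / 4 ^ n).
  { rewrite IHn. field. apply pow_nonzero; lra. }
  rewrite E.
  change (Factorial.fact (S (S (2*n)))) with (S (S (2*n)) * Factorial.fact (S (2*n)))%nat; change (Factorial.fact (S (2*n))) with (S (2*n) * Factorial.fact (2*n))%nat; change (Factorial.fact (S n)) with (S n * Factorial.fact n)%nat; rewrite !mult_INR, !S_INR, mult_INR.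
  simpl (INR 2). pose proof (INR_fact_neq_0 n). pose proof (INR_fact_neq_0 (2*n)). pose proof (pos_INR n).
  simpl pow. field. repeat split; try lra. apply pow_nonzero; lra.
Qed.
Lemma is_derive_sum (f : nat -> R -> R) (df : nat -> R -> R) x n :
  (forall k, (k <= n)%nat -> is_derive (f k) x (df k x)) ->
  is_derive (fun y => sum_f_R0 (fun k => f k y) n) x (sum_f_R0 (fun k => df k x) n).
Proof.
  induction n; intro H; simpl. apply H; lia.
  apply (is_derive_plus (fun y => sum_f_R0 (fun k => f k y) n) (f (S n))).
  apply IHn; intros; apply H; lia. apply H; lia.
Qed.

Lemma is_RInt_sum (f : nat -> R -> R) (v : nat -> R) a c n :
  (forall k, (k <= n)%nat -> is_RInt (f k) a c (v k)) ->
  is_RInt (fun y => sum_f_R0 (fun k => f k y) n) a c (sum_f_R0 v n).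
Proof.
  induction n; intro H; simpl. apply H; lia.
  apply (is_RInt_plus (fun y => sum_f_R0 (fun k => f k y) n) (f (S n))).
  apply IHn; intros; apply H; lia. apply H; lia.
Qed.

Definition phi (r : nat) (w : R) : R :=
  sum_f_R0 (fun k => Binomial.C r k * (-1)^k * w^(2*k+1) / (2 * INR k + 1)) r.

Lemma phi_derive r w : is_derive (phi r) w ((1 - w^2)^r).
Proof.
  unfold phi.
  replace ((1 - w^2)^r) with (sum_f_R0 (fun k => Binomial.C r k * (-1)^k * w^(2*k)) r).
  apply (is_derive_sum (fun k y => Binomial.C r k * (-1)^k * y^(2*k+1) / (2 * INR k + 1))
          (fun k y => Binomial.C r k * (-1)^k * y^(2*k))).
  intros k _. auto_derive. trivial.
  replace (Init.Nat.pred (k + (k + 0) + 1)) with (2*k)%nat by lia. replace (k + (k + 0) + 1)%nat with (S (2*k)) by lia. rewrite S_INR, mult_INR. simpl (INR 2).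
  pose proof (pos_INR k). field. lra.
  replace (1 - w^2) with (- w^2 + 1) by ring. rewrite binomial.
  apply sum_eq. intros i _. rewrite pow1, pow_mult.
  replace ((-w^2)^i) with ((-1)^i * (w^2)^i). ring.
  rewrite <- Rpow_mult_distr. f_equal. ring.
Qed.

Lemma phi0 r : phi r 0 = 0.
Proof.
  unfold phi. rewrite <- (Rmult_0_l (INR r)) at 1.
  apply Rle_antisym; [|apply Rle_trans with (sum_f_R0 (fun _ => 0) r)]; 
  [apply Rle_trans with (sum_f_R0 (fun _ => 0) r)| |];
  try (apply sum_Rle; intros; rewrite pow_i by lia; lra).
  all: rewrite sum_cte; lra.
Qed.

Lemma deriv_cont (f : R -> R) (x l : R) : is_derive f x l -> continuity_pt f x.
Proof. intro H. apply continuity_pt_filterlim. apply (ex_derive_continuous (K:=R_AbsRing) (V:=R_NormedModule) f x). exists l; exact H. Qed.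

Lemma mono_gen (f df : R -> R) (a c : R) : a <= c -> (forall x, a <= x <= c -> is_derive f x (df x)) ->
  (forall x, a <= x <= c -> 0 <= df x) -> f a <= f c.
Proof.
  intros Hac Hd Hp.
  destruct (MVT_gen f a c df) as [x [Hx E]].
  - intros x Hx. rewrite Rmin_left, Rmax_right in Hx by lra. apply Hd; lra.
  - intros x Hx. rewrite Rmin_left, Rmax_right in Hx by lra. eapply deriv_cont, Hd; lra.
  - rewrite Rmin_left, Rmax_right in Hx by lra. specialize (Hp x Hx). nra.
Qed.

Lemma phi_bounds r w : 0 <= w <= 1 -> 0 <= phi r w <= w.
Proof.
  intros Hw. split.
  - rewrite <- (phi0 r). apply (mono_gen _ (fun x => (1 - x^2)^r)); try lra.
    intros; apply phi_derive. intros x Hx. apply pow_le. nra.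
  - assert (H: (fun x => x - phi r x) 0 <= (fun x => x - phi r x) w).
    { apply (mono_gen (fun x => x - phi r x) (fun x => 1 - (1 - x^2)^r)); try lra.
      intros. apply (is_derive_minus (fun x:R => x) (phi r)). apply (@is_derive_id R_AbsRing). apply phi_derive.
      intros x Hx. assert (H1: (1 - x^2)^r <= 1^r) by (apply pow_incr; nra). rewrite pow1 in H1. lra. }
    simpl in H. rewrite phi0 in H. lra.
Qed.

Definition P N y := sum_f_R0 (fun m => b m * y^m) N.
Definition F N y := sqrt (1 - y) * P N y.

Lemma is_derive_eq (f : R -> R) x l l' : is_derive f x l -> l = l' -> is_derive f x l'.
Proof. intros H <-; exact H. Qed.

Lemma F_derive N y : y < 1 ->
  is_derive (F N) y (- (INR N + 1) * b (S N) * y^N / sqrt (1 - y)).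
Proof.
  intro Hy. assert (Hs: 0 < sqrt (1 - y)) by (apply sqrt_lt_R0; lra).
  assert (Hss: sqrt (1 - y) * sqrt (1 - y) = 1 - y) by (apply sqrt_sqrt; lra).
  induction N.
  - unfold F, P. simpl sum_f_R0. auto_derive. lra.
    replace (1 + - y) with (1 - y) by ring. simpl. field. lra.
  - apply is_derive_ext with (f := fun t => F N t + b (S N) * (sqrt (1 - t) * t^(S N))).
    { intro t. unfold F, P. simpl. ring. }
    assert (Hg: is_derive (fun t => b (S N) * (sqrt (1 - t) * t^(S N))) y
      (b (S N) * (- / (2 * sqrt (1 - y)) * y^(S N) + sqrt (1 - y) * (INR (S N) * y^N)))).
    { auto_derive. lra. replace (1 + - y) with (1 - y) by ring. simpl. ring. }
    eapply is_derive_eq. apply (is_derive_plus (F N) _ _ _ _ IHN Hg).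
    rewrite (b_S (S N)), !S_INR. unfold plus; simpl.
    set (s := sqrt (1 - y)) in *.
    assert (Ey: y = 1 - s * s) by lra. clearbody s.
    rewrite Ey. pose proof (pos_INR N). field. lra.
Qed.

Lemma P0 N : P N 0 = 1.
Proof. induction N. unfold P; simpl; ring. unfold P in *. simpl. rewrite IHN. ring. Qed.

Lemma F_bounds N y : 0 <= y < 1 -> 0 <= 1 - F N y <= b (S N) * y^(S N) / sqrt (1 - y).
Proof.
  intros Hy. split.
  - assert (H: (fun t => - F N t) 0 <= (fun t => - F N t) y).
    { apply (mono_gen (fun t => - F N t) (fun t => (INR N + 1) * b (S N) * t^N / sqrt (1 - t))). lra.
      intros x Hx. eapply is_derive_eq. apply (is_derive_opp (F N)). apply F_derive. lra.
      assert (sqrt (1 - x) <> 0) by (apply Rgt_not_eq, sqrt_lt_R0; lra). pose proof (pos_INR N).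
      unfold opp; simpl. field. repeat split; lra.
      intros x Hx. pose proof (pos_INR N). pose proof (b_pos (S N)).
      apply Rmult_le_pos. apply Rmult_le_pos. nra. apply pow_le; lra.
      left; apply Rinv_0_lt_compat, sqrt_lt_R0; lra. }
    simpl in H. unfold F at 1 in H. rewrite P0, Rminus_0_r, sqrt_1 in H. lra.
  - set (G := fun t => b (S N) * t^(S N) / sqrt (1 - t) - 1 + F N t).
    assert (H: G 0 <= G y).
    { apply (mono_gen G (fun t => b (S N) * t^(S N) / (2 * (1 - t) * sqrt (1 - t)))). lra.
      intros x Hx.
      assert (Hg: is_derive (fun t => b (S N) * t^(S N) / sqrt (1 - t) - 1) x
         (b (S N) * (INR (S N) * x^N / sqrt (1 - x) + x^(S N) / (2 * (1 - x) * sqrt (1 - x))))).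
      { set (c := b (S N)). auto_derive. split; [lra|split; [apply Rgt_not_eq, sqrt_lt_R0; lra | exact I]].
        replace (1 + - x) with (1 - x) by ring.
        assert (Hs: 0 < sqrt (1 - x)) by (apply sqrt_lt_R0; lra).
        assert (Hss: sqrt (1 - x) * sqrt (1 - x) = 1 - x) by (apply sqrt_sqrt; lra).
        set (s := sqrt (1 - x)) in *. replace (1 - x) with (s * s) by lra.
        change (match N with 0%nat => 1 | S _ => INR N + 1 end) with (INR (S N)). rewrite S_INR. simpl pow. field. lra. }
      eapply is_derive_eq. apply (is_derive_plus _ (F N) _ _ _ Hg (F_derive N x ltac:(lra))).
      assert (sqrt (1 - x) <> 0) by (apply Rgt_not_eq, sqrt_lt_R0; lra). pose proof (pos_INR N).
      rewrite !S_INR. unfold plus; simpl. field. repeat split; lra.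
      intros x Hx. pose proof (b_pos (S N)).
      apply Rmult_le_pos. apply Rmult_le_pos. lra. apply pow_le; lra.
      left; apply Rinv_0_lt_compat. apply Rmult_lt_0_compat. lra. apply sqrt_lt_R0; lra. }
    unfold G in H. unfold F at 1 in H. rewrite P0, Rminus_0_r, sqrt_1 in H.
    rewrite pow_i in H by lia. lra.
Qed.

Lemma INR_match K : match K with O => 1 | S _ => INR K + 1 end = INR K + 1.
Proof. destruct K; simpl; ring. Qed.
Ltac fixinr := rewrite ?INR_match.

Lemma RInt_ok (f : R -> R) a c : (forall x, Rmin a c <= x <= Rmax a c -> ex_derive f x) ->
  is_RInt f a c (RInt f a c).
Proof.
  intro H. apply (RInt_correct (V:=R_CompleteNormedModule)). apply (ex_RInt_continuous (V:=R_CompleteNormedModule)). intros z Hz.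
  apply (ex_derive_continuous (K:=R_AbsRing) (V:=R_NormedModule)). apply H; exact Hz.
Qed.

Lemma is_RInt_eq (f : R -> R) a c l l' : is_RInt f a c l -> l = l' -> is_RInt f a c l'.
Proof. intros H <-; exact H. Qed.

Definition W K : R := RInt (fun w => (1 - w^2)^K) 0 1.

Lemma W_is K : is_RInt (fun w => (1 - w^2)^K) 0 1 (W K).
Proof. apply RInt_ok. intros; auto_derive; trivial. Qed.

Lemma W_rec K : (2 * INR K + 3) * W (S K) = (2 * INR K + 2) * W K.
Proof.
  pose (h := fun w => w * (1 - w^2)^(S K)).
  pose (dh := fun w => (2 * INR K + 3) * (1 - w^2)^(S K) - (2 * INR K + 2) * (1 - w^2)^K).
  assert (H1: is_RInt dh 0 1 (minus (h 1) (h 0))).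
  { apply (is_RInt_derive (V:=R_CompleteNormedModule)).
    - intros x _. unfold h, dh. auto_derive. trivial. fixinr. replace (1 + - (x * (x * 1))) with (1 - x^2) by ring. simpl. ring.
    - intros x _. apply (ex_derive_continuous (K:=R_AbsRing) (V:=R_NormedModule)). unfold dh. auto_derive; trivial. }
  assert (H2: is_RInt dh 0 1 ((2 * INR K + 3) * W (S K) - (2 * INR K + 2) * W K)).
  { apply is_RInt_ext with (f := fun w => minus (scal (2 * INR K + 3) ((1 - w^2)^(S K))) (scal (2 * INR K + 2) ((1 - w^2)^K))).
    intros; reflexivity.
    apply is_RInt_eq with (l := minus (scal (2 * INR K + 3) (W (S K))) (scal (2 * INR K + 2) (W K))).
    apply (is_RInt_minus (V:=R_NormedModule)); apply (is_RInt_scal (V:=R_NormedModule)); apply W_is.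
    reflexivity. }
  apply (is_RInt_unique (V:=R_CompleteNormedModule)) in H1. apply (is_RInt_unique (V:=R_CompleteNormedModule)) in H2. rewrite H1 in H2.
  assert (E: minus (h 1) (h 0) = 0).
  { unfold h, minus, plus, opp; simpl. ring. }
  lra.
Qed.

Lemma W_val K : W K = / ((2 * INR K + 1) * b K).
Proof.
  induction K.
  - unfold W. rewrite RInt_ext with (g := fun _ => 1). rewrite RInt_const. unfold scal; simpl; unfold mult; simpl. field.
    intros; simpl; ring.
  - pose proof (W_rec K). pose proof (pos_INR K). pose proof (b_pos K).
    rewrite b_S, S_INR. apply Rmult_eq_reg_l with (2 * INR K + 3). 2: lra.
    rewrite H, IHK. field. lra.
Qed.

Definition J r m : R := RInt (fun w => phi r w * (w * (1 - w^2)^(2*m))) 0 1.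

Lemma J_is r m : is_RInt (fun w => phi r w * (w * (1 - w^2)^(2*m))) 0 1 (J r m).
Proof.
  apply RInt_ok. intros x _.
  apply (ex_derive_mult (phi r) (fun w => w * (1 - w^2)^(2*m))).
  exists ((1 - x^2)^r); apply phi_derive. auto_derive; trivial.
Qed.

Lemma J_val r m : 2 * (2 * INR m + 1) * J r m = W (r + 2 * m + 1).
Proof.
  pose (h := fun w => phi r w * (1 - w^2)^(S (2*m))).
  pose (dh := fun w => (1 - w^2)^(r + 2*m + 1) - 2 * (2 * INR m + 1) * (phi r w * (w * (1 - w^2)^(2*m)))).
  assert (H1: is_RInt dh 0 1 (minus (h 1) (h 0))).
  { apply (is_RInt_derive (V:=R_CompleteNormedModule)).
    - intros x _. unfold h, dh.
      assert (Hg: is_derive (fun w => (1 - w^2)^(S (2*m))) x (- 2 * x * (2 * INR m + 1) * (1 - x^2)^(2*m))).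
      { auto_derive. trivial. fixinr. replace (1 + - (x * (x * 1))) with (1 - x^2) by ring.
        replace (m + (m + 0))%nat with (2 * m)%nat by lia. rewrite mult_INR. simpl (INR 2). ring. }
      eapply is_derive_eq. apply (is_derive_mult (phi r) _ x _ _ (phi_derive r x) Hg).
      intros; apply Rmult_comm.
      unfold plus, mult; simpl. rewrite !pow_add. simpl. ring.
    - intros x _. apply (ex_derive_continuous (K:=R_AbsRing) (V:=R_NormedModule)). unfold dh.
      apply (ex_derive_minus (K:=R_AbsRing) (fun w => (1 - w^2)^(r + 2*m + 1))). auto_derive; trivial.
      apply (ex_derive_scal (fun w => (phi r w * (w * (1 - w^2)^(2*m))))).
      apply (ex_derive_mult (phi r) (fun w => w * (1 - w^2)^(2*m))).
      exists ((1 - x^2)^r); apply phi_derive. auto_derive; trivial. }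
  assert (H2: is_RInt dh 0 1 (W (r + 2*m + 1) - 2 * (2 * INR m + 1) * J r m)).
  { apply is_RInt_eq with (l := minus (W (r + 2*m + 1)) (scal (2 * (2 * INR m + 1)) (J r m))).
    apply (is_RInt_minus (V:=R_NormedModule)). apply W_is. apply (is_RInt_scal (V:=R_NormedModule)). apply J_is.
    reflexivity. }
  apply (is_RInt_unique (V:=R_CompleteNormedModule)) in H1. apply (is_RInt_unique (V:=R_CompleteNormedModule)) in H2. rewrite H1 in H2.
  assert (E: minus (h 1) (h 0) = 0).
  { unfold h, minus, plus, opp; simpl. rewrite phi0. ring. }
  lra.
Qed.

Lemma term_eq r m : lhs_term r (S m) = 4 / 4^r * b m * J r m.
Proof.
  pose (Kk := (r + 2 * m + 1)%nat).
  assert (HJ := J_val r m). rewrite W_val in HJ.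
  unfold lhs_term.
  replace (4 * S m + 2 * r - 2)%nat with (2 * Kk)%nat by (unfold Kk; lia).
  replace (2 * S m + r - 1)%nat with Kk by (unfold Kk; lia).
  rewrite !Cb.
  assert (E4: 4^(S m) * 4^(S m) * 4^r = 4 * 4^Kk).
  { rewrite <- !pow_add. replace (S m + S m + r)%nat with (S Kk) by (unfold Kk; lia). reflexivity. }
  assert (EK: INR Kk = INR r + 2 * INR m + 1) by (unfold Kk; rewrite !plus_INR, mult_INR; simpl; ring).
  fold Kk in HJ. rewrite EK in HJ. rewrite b_S, S_INR.
  pose proof (pos_INR m). pose proof (pos_INR r). pose proof (b_pos m). pose proof (b_pos Kk).
  assert (H4r: 0 < 4^r) by (apply pow_lt; lra). assert (H4K: 0 < 4^Kk) by (apply pow_lt; lra).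
  assert (HJ': J r m = / ((2 * (INR r + 2 * INR m + 1) + 1) * b Kk) / (2 * (2 * INR m + 1))).
  { rewrite <- HJ. field. lra. }
  rewrite HJ'.
  apply Rmult_eq_reg_r with (4^r). 2: lra.
  replace (4 / 4 ^ r * b m * (/ ((2 * (INR r + 2 * INR m + 1) + 1) * b Kk) / (2 * (2 * INR m + 1))) * 4^r)
    with (4 * b m / ((2 * (INR r + 2 * INR m + 1) + 1) * b Kk * (2 * (2 * INR m + 1)))) by (field; repeat split; lra).
  replace (4 * b m) with (4 * 4^Kk / 4^Kk * b m) by (field; lra). rewrite <- E4.
  simpl pow. field. repeat split; try lra.
Qed.

Lemma calB_is k : is_RInt (fun w => w * ((w^2/2)^k / sqrt (1 - w^2/2))) 0 1 (calB k).
Proof.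
  unfold calB.
  replace (1/2) with ((fun w => w^2/2) 1) by (simpl; field).
  replace 0 with ((fun w : R => w^2/2) 0) at 2 by (simpl; field).
  apply (is_RInt_comp (V:=R_CompleteNormedModule) (fun t => t^k / sqrt (1 - t)) (fun w => w^2/2) (fun w => w)).
  - intros x Hx. rewrite Rmin_left, Rmax_right in Hx by lra.
    apply (ex_derive_continuous (K:=R_AbsRing) (V:=R_NormedModule)).
    auto_derive. split. nra. split. apply Rgt_not_eq, sqrt_lt_R0. nra. exact I.
  - intros x _. split. auto_derive. trivial. field.
    apply (ex_derive_continuous (K:=R_AbsRing) (V:=R_NormedModule)). auto_derive. trivial.
Qed.

Lemma is_RInt_cd (f : R -> R) a c l u d : is_RInt f a c l -> is_RInt (fun x => u * f x * d) a c (u * l * d).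
Proof.
  intro H. apply is_RInt_ext with (f := fun x => scal (u * d) (f x)).
  intros; unfold scal; simpl; unfold mult; simpl; ring.
  eapply is_RInt_eq. apply (is_RInt_scal (V:=R_NormedModule)). exact H.
  unfold scal; simpl; unfold mult; simpl; ring.
Qed.

Lemma pow2_split r k : (1 <= r)%nat -> (k <= r)%nat -> 4 ^ r = 2 ^ (2 * r - k - 1) * 2 ^ k * 2.
Proof.
  intros Hr Hk. replace 4 with (2^2) by (simpl; ring). rewrite <- pow_mult.
  rewrite <- pow_add. replace 2 with (2^1) at 3 by ring. rewrite <- pow_add. f_equal. lia.
Qed.

Lemma rhs_is r : (1 <= r)%nat ->
  is_RInt (fun w => 4 / 4^r * phi r w / sqrt (2 - w^2)) 0 1 (rhs_value r).
Proof.
  intro Hr. unfold rhs_value.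
  rewrite scal_sum.
  apply is_RInt_ext with (f := fun w => sum_f_R0 (fun k =>
     (-1) ^ k / ((2 * INR k + 1) * 2 ^ (2 * r - k - 1)) * Binomial.C r k * (w * ((w^2/2)^k / sqrt (1 - w^2/2))) * sqrt 2) r).
  2: { apply is_RInt_sum. intros k _. apply is_RInt_cd. apply calB_is. }
  intros w Hw. rewrite Rmin_left, Rmax_right in Hw by lra.
  unfold phi. 
  assert (Hs: 0 < sqrt (1 - w^2/2)) by (apply sqrt_lt_R0; nra).
  assert (Hs2: 0 < sqrt 2) by (apply sqrt_lt_R0; lra).
  assert (E2: sqrt (2 - w^2) = sqrt 2 * sqrt (1 - w^2/2)).
  { rewrite <- sqrt_mult_alt by lra. f_equal. field. }
  assert (E22: sqrt 2 * sqrt 2 = 2) by (apply sqrt_sqrt; lra).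
  rewrite E2.
  replace (4 / 4 ^ r * sum_f_R0 (fun k => Binomial.C r k * (-1) ^ k * w ^ (2 * k + 1) / (2 * INR k + 1)) r /
    (sqrt 2 * sqrt (1 - w ^ 2 / 2))) with
    (sum_f_R0 (fun k => Binomial.C r k * (-1) ^ k * w ^ (2 * k + 1) / (2 * INR k + 1)) r *
     (4 / 4 ^ r / (sqrt 2 * sqrt (1 - w ^ 2 / 2)))).
  2: { field. repeat split; try lra. apply pow_nonzero; lra. }
  rewrite (Rmult_comm (sum_f_R0 _ r)), scal_sum. apply sum_eq. intros k Hk.
  rewrite (pow2_split r k Hr Hk).
  set (s := sqrt (1 - w^2/2)) in *. set (s2 := sqrt 2) in *.
  replace 4 with (2 * (s2 * s2)) by lra.
  assert (Ew: (w^2/2)^k = w^(2*k) / 2^k) by (unfold Rdiv; rewrite Rpow_mult_distr, pow_inv, pow_mult; reflexivity).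
  rewrite Ew, pow_add, pow_1.
  pose proof (pos_INR k).
  field. repeat split; try lra; apply pow_nonzero; lra.
Qed.

Lemma is_RInt_l (f : R -> R) a c l u : is_RInt f a c l -> is_RInt (fun x => u * f x) a c (u * l).
Proof. intro H. apply (is_RInt_scal (V:=R_NormedModule)). exact H. Qed.

Lemma partial_is r N :
  is_RInt (fun w => sum_f_R0 (fun m => 4 / 4^r * b m * (phi r w * (w * (1 - w^2)^(2*m)))) N) 0 1
    (sum_f_R0 (fun m => lhs_term r (S m)) N).
Proof.
  apply is_RInt_sum. intros m _. rewrite term_eq. apply is_RInt_l. apply J_is.
Qed.

Lemma partial_fun r N w :
  sum_f_R0 (fun m => 4 / 4^r * b m * (phi r w * (w * (1 - w^2)^(2*m)))) N
  = 4 / 4^r * (phi r w * (w * P N ((1 - w^2)^2))).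
Proof.
  induction N. unfold P; simpl; ring.
  rewrite tech5, IHN. unfold P. rewrite tech5. rewrite <- pow_mult. ring.
Qed.

Lemma pointwise r N w : 0 <= w <= 1 ->
  0 <= phi r w * (/ sqrt (2 - w^2) - w * P N ((1 - w^2)^2)) <= b (S N).
Proof.
  intros Hw. pose proof (b_pos (S N)).
  destruct (Req_dec w 0) as [->|Hw0].
  { rewrite phi0. lra. }
  assert (Hwp: 0 < w) by lra.
  set (y := (1 - w^2)^2).
  assert (Hz: 0 <= 1 - w^2 < 1) by (simpl; nra).
  assert (Hy: 0 <= y < 1) by (unfold y; simpl; nra).
  assert (Hq1: 1 <= sqrt (2 - w^2)).
  { rewrite <- sqrt_1. apply sqrt_le_1_alt. nra. }
  set (q := sqrt (2 - w^2)) in *.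
  assert (Hsy: sqrt (1 - y) = w * q).
  { unfold q, y. rewrite <- (sqrt_square w) at 2 by lra. rewrite <- sqrt_mult_alt by nra. f_equal. ring. }
  destruct (F_bounds N y Hy) as [A0 A1]. unfold F in A0, A1. rewrite Hsy in A0, A1.
  destruct (phi_bounds r w Hw) as [p0 p1].
  assert (E: / q - w * P N y = (1 - w * q * P N y) / q) by (field; lra).
  rewrite E.
  assert (Hyn: y^(S N) <= 1) by (rewrite <- (pow1 (S N)); apply pow_incr; lra).
  assert (Hyn0: 0 <= y^(S N)) by (apply pow_le; lra).
  set (A := 1 - w * q * P N y) in *.
  split.
  - apply Rmult_le_pos. lra. apply Rmult_le_pos. lra. left; apply Rinv_0_lt_compat; lra.
  - assert (A2: A * (w * q) <= b (S N) * y^(S N)).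
    { apply Rmult_le_reg_r with (/ (w * q)). apply Rinv_0_lt_compat; nra.
      rewrite Rmult_assoc, Rinv_r by nra. rewrite Rmult_1_r. exact A1. }
    apply Rle_trans with (w * (A / q)).
    apply Rmult_le_compat_r. apply Rmult_le_pos. lra. left; apply Rinv_0_lt_compat; lra. lra.
    apply Rmult_le_reg_r with (q * q). nra.
    replace (w * (A / q) * (q * q)) with (A * (w * q)) by (field; lra).
    apply Rle_trans with (b (S N) * y^(S N)). exact A2.
    assert (1 <= q * q) by nra. nra.
Qed.

Lemma gap_bounds r N : (1 <= r)%nat ->
  0 <= rhs_value r - sum_f_R0 (fun m => lhs_term r (S m)) N <= 4 / 4^r * b (S N).
Proof.
  intro Hr.
  assert (H4: 0 < 4 / 4^r) by (apply Rdiv_lt_0_compat; [lra | apply pow_lt; lra]).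
  assert (HD: is_RInt (fun w => 4 / 4^r * (phi r w * (/ sqrt (2 - w^2) - w * P N ((1 - w^2)^2)))) 0 1
            (rhs_value r - sum_f_R0 (fun m => lhs_term r (S m)) N)).
  { eapply is_RInt_ext. 2: apply (is_RInt_minus (V:=R_NormedModule) _ _ _ _ _ _ (rhs_is r Hr) (partial_is r N)).
    intros w Hw. rewrite Rmin_left, Rmax_right in Hw by lra. cbv beta. rewrite partial_fun. set (p := P N ((1 - w^2)^2)). unfold minus, plus, opp; simpl. field.
    split. apply Rgt_not_eq, sqrt_lt_R0. nra. apply pow_nonzero; lra. }
  split.
  - apply (is_RInt_le (fun _ => 0) (fun w => 4 / 4^r * (phi r w * (/ sqrt (2 - w^2) - w * P N ((1 - w^2)^2)))) 0 1). lra.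
    eapply is_RInt_eq. apply (is_RInt_const (V:=R_NormedModule)). unfold scal; simpl; unfold mult; simpl; ring.
    exact HD. intros x Hx. apply Rmult_le_pos. lra. apply pointwise. lra.
  - apply (is_RInt_le (fun w => 4 / 4^r * (phi r w * (/ sqrt (2 - w^2) - w * P N ((1 - w^2)^2)))) (fun _ => 4 / 4^r * b (S N)) 0 1). lra. exact HD.
    eapply is_RInt_eq. apply (is_RInt_const (V:=R_NormedModule)). unfold scal; simpl; unfold mult; simpl; ring.
    intros x Hx. apply Rmult_le_compat_l. lra. apply pointwise. lra.
Qed.

Theorem theorem3p0p4 (r : nat) (hr : (1 <= r)%nat) :
  is_series (fun m : nat => lhs_term r (S m)) (rhs_value r).
Proof.
  change (is_lim_seq (sum_n (fun m : nat => lhs_term r (S m))) (rhs_value r)).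
  apply is_lim_seq_le_le with (u := fun N => rhs_value r - 4 / 4^r * b (S N)) (w := fun _ => rhs_value r).
  - intro N. rewrite sum_n_Reals. pose proof (gap_bounds r N hr). lra.
  - replace (Finite (rhs_value r)) with (Finite (rhs_value r - 4 / 4^r * 0)) by (f_equal; ring).
    apply (is_lim_seq_minus' (fun _ => rhs_value r) (fun N => 4 / 4^r * b (S N))).
    apply is_lim_seq_const.
    apply (is_lim_seq_scal_l (fun N => b (S N)) (4 / 4^r) 0).
    apply -> (is_lim_seq_incr_1 b). apply b_lim.
  - apply is_lim_seq_const.
Qed.
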